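(* For every $n\ge1$, $$\mathrm{vol}\,C(\mathbb{A}_n)=\sum_{i=1}^{n}\binom{n-1}{i-1}\binom{n+1}{i}=\binom{2n}{n}.$$
   Context: Let $\Phi^+=\{e_i+e_{i+1}+\dots+e_j: 1\le i\le j\le n\}\subset\mathbb{Z}^n$ and $C(\mathbb{A}_n)=\mathrm{conv}(\Phi^+\cup(-\Phi^+))\subset\mathbb{R}^n$, the convex hull of all roots of the root system $\mathbb{A}_n$ written in the basis of simple roots. The integral volume $\mathrm{vol}$ on $\mathbb{R}^n$ is $n!$ times Lebesgue measure. *)

(* Defs.v *)
From Stdlib Require Import Reals ZArith ClassicalEpsilon.
Open Scope R_scope.

(* Points of R^n are functions nat -> R; only coordinates 0..n-1 matter. *)

Fixpoint fsum (n : nat) (f : nat -> R) : R :=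
  match n with O => 0 | S m => fsum m f + f m end.

(* k-th coordinate of the positive root e_i + e_{i+1} + ... + e_j (0-indexed) *)
Definition rootc (i j k : nat) : R :=
  if (Nat.leb i k && Nat.leb k j)%bool then 1 else 0.

(* x in C(A_n) = conv(Phi+ U -Phi+): x is a convex combination of the roots
   +-(e_i+...+e_j), 0 <= i <= j < n, with weights w i j (for +) and v i j (for -). *)
Definition in_CA (n : nat) (x : nat -> R) : Prop :=
  exists w v : nat -> nat -> R,
    (forall i j, 0 <= w i j /\ 0 <= v i j) /\
    fsum n (fun i => fsum n (fun j =>
       if Nat.leb i j then w i j + v i j else 0)) = 1 /\
    forall k, (k < n)%nat ->
      x k = fsum n (fun i => fsum n (fun j =>
               if Nat.leb i j then (w i j - v i j) * rootc i j k else 0)).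

Definition in_cube (n k : nat) (a : nat -> Z) (x : nat -> R) : Prop :=
  forall m, (m < n)%nat ->
    IZR (a m) / INR k <= x m <= (IZR (a m) + 1) / INR k.

Definition ind (P : Prop) : R :=
  if excluded_middle_informative P then 1 else 0.

(* Sum of F a over all integer vectors a with a m in [-L, L) for m < d
   (coordinates >= d set to 0). *)
Fixpoint gsum (d L : nat) (F : (nat -> Z) -> R) : R :=
  match d with
  | O => F (fun _ => 0%Z)
  | S d' => fsum (2 * L) (fun t =>
       gsum d' L (fun a => F (fun m => if Nat.eqb m d'
                                         then (Z.of_nat t - Z.of_nat L)%Z
                                         else a m)))
  end.

(* Inner / outer Jordan approximations of P inside the box [-R,R]^n
   by the grid of cubes of side 1/k. *)
Definition inner_approx (n : nat) (P : (nat -> R) -> Prop) (Rb k : nat) : R :=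
  (/ INR k) ^ n * gsum n (Rb * k) (fun a => ind (forall x, in_cube n k a x -> P x)).

Definition outer_approx (n : nat) (P : (nat -> R) -> Prop) (Rb k : nat) : R :=
  (/ INR k) ^ n * gsum n (Rb * k) (fun a => ind (exists x, in_cube n k a x /\ P x)).

(* P (a bounded subset of R^n) is Jordan measurable with Jordan content
   (= Lebesgue measure) c. *)
Definition jordan_content (n : nat) (P : (nat -> R) -> Prop) (c : R) : Prop :=
  exists Rb : nat,
    (forall x, P x -> forall m, (m < n)%nat -> - INR Rb <= x m <= INR Rb) /\
    Un_cv (fun k => inner_approx n P Rb (S k)) c /\
    Un_cv (fun k => outer_approx n P Rb (S k)) c.

(* Main.v *)
Require Import Defs.
From Stdlib Require Import Reals ZArith ClassicalEpsilon.
Open Scope R_scope.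
From Stdlib Require Import Lra Lia.


Lemma fsum_S n f : fsum (S n) f = fsum n f + f n.
Proof. reflexivity. Qed.

Lemma fsum_ext n f g : (forall i, (i < n)%nat -> f i = g i) -> fsum n f = fsum n g.
Proof. induction n; simpl; intros H; auto. rewrite IHn by (intros; apply H; lia). rewrite H by lia; auto. Qed.

Lemma fsum_le n f g : (forall i, (i < n)%nat -> f i <= g i) -> fsum n f <= fsum n g.
Proof. induction n; simpl; intros H. lra. assert (f n <= g n) by (apply H; lia).
 assert (fsum n f <= fsum n g) by (apply IHn; intros; apply H; lia). lra. Qed.

Lemma fsum_0 n : fsum n (fun _ => 0) = 0.
Proof. induction n; simpl; try rewrite IHn; lra. Qed.

Lemma fsum_zero n f : (forall i, (i < n)%nat -> f i = 0) -> fsum n f = 0.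
Proof. intros H. rewrite (fsum_ext n f (fun _ => 0)) by auto. apply fsum_0. Qed.

Lemma fsum_plus n f g : fsum n (fun i => f i + g i) = fsum n f + fsum n g.
Proof. induction n; simpl; try rewrite IHn; lra. Qed.

Lemma fsum_minus n f g : fsum n (fun i => f i - g i) = fsum n f - fsum n g.
Proof. induction n; simpl; try rewrite IHn; lra. Qed.

Lemma fsum_scal n c f : fsum n (fun i => c * f i) = c * fsum n f.
Proof. induction n; simpl; try rewrite IHn; lra. Qed.

Lemma fsum_scalr n c f : fsum n (fun i => f i * c) = fsum n f * c.
Proof. induction n; simpl; try rewrite IHn; lra. Qed.

Lemma fsum_shift n f : fsum (S n) f = f O + fsum n (fun i => f (S i)).
Proof. induction n; simpl in *. lra. rewrite IHn. lra. Qed.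

Lemma fsum_split a b f : fsum (a + b) f = fsum a f + fsum b (fun i => f (a + i)%nat).
Proof. induction b; simpl. rewrite Nat.add_0_r; lra. rewrite Nat.add_succ_r. simpl. rewrite IHb. lra. Qed.

Lemma fsum_rev n f : fsum n f = fsum n (fun i => f (n - 1 - i)%nat).
Proof. induction n. reflexivity. rewrite (fsum_shift n (fun i => f (S n - 1 - i)%nat)).
 simpl fsum. rewrite IHn. replace (S n - 1 - 0)%nat with n by lia. rewrite Rplus_comm. f_equal.
 apply fsum_ext. intros. f_equal. lia. Qed.

Lemma fsum_trunc n m f : (m <= n)%nat -> (forall i, (m <= i < n)%nat -> f i = 0) -> fsum n f = fsum m f.
Proof. intros H1 H2. replace n with (m + (n - m))%nat by lia. rewrite fsum_split.
 rewrite (fsum_zero (n - m)). lra. intros; apply H2; lia. Qed.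

Lemma fsum_abs n f : Rabs (fsum n f) <= fsum n (fun i => Rabs (f i)).
Proof. induction n; simpl. rewrite Rabs_R0; lra. eapply Rle_trans. apply Rabs_triang. lra. Qed.

Lemma fsum_nonneg n f : (forall i, (i < n)%nat -> 0 <= f i) -> 0 <= fsum n f.
Proof. intros H. rewrite <- (fsum_0 n). apply fsum_le. auto. Qed.

Lemma fsum_swap n m f : fsum n (fun i => fsum m (fun j => f i j)) = fsum m (fun j => fsum n (fun i => f i j)).
Proof. induction n; simpl. rewrite fsum_0; auto. rewrite IHn, <- fsum_plus. auto. Qed.

Fixpoint bin (n k : nat) : nat :=
  match n, k with
  | _, O => 1%nat
  | O, S _ => 0%nat
  | S n', S k' => (bin n' k' + bin n' k)%nat
  end.

Lemma bin_0 n : bin n 0 = 1%nat. Proof. destruct n; auto. Qed.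
Lemma bin_gt n k : (n < k)%nat -> bin n k = 0%nat.
Proof. revert k; induction n; intros [|k] H; simpl; try lia; auto.
 rewrite !IHn by lia. auto. Qed.
Lemma bin_nn n : bin n n = 1%nat.
Proof. induction n; simpl; auto. rewrite IHn, bin_gt; lia. Qed.

Definition Bz (n : nat) (k : Z) : R := if (k <? 0)%Z then 0 else INR (bin n (Z.to_nat k)).

Lemma Bz_neg n k : (k < 0)%Z -> Bz n k = 0.
Proof. intros; unfold Bz. destruct (Z.ltb_spec k 0); lia || auto. Qed.
Lemma Bz_big n k : (Z.of_nat n < k)%Z -> Bz n k = 0.
Proof. intros H; unfold Bz. destruct (Z.ltb_spec k 0). auto. rewrite bin_gt. auto. apply Nat2Z.inj_lt. rewrite Z2Nat.id; lia. Qed.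
Lemma Bz_pascal n k : Bz (S n) (k + 1) = Bz n k + Bz n (k + 1).
Proof. unfold Bz. destruct (Z.ltb_spec (k+1) 0).
 destruct (Z.ltb_spec k 0); try lia. lra.
 destruct (Z.ltb_spec k 0).
 - assert (k = -1)%Z by lia. subst. simpl. rewrite bin_0. simpl. lra.
 - replace (Z.to_nat (k+1)) with (S (Z.to_nat k)) by lia. simpl. rewrite plus_INR; lra.
Qed.
Lemma Bz_nonneg n k : 0 <= Bz n k.
Proof. unfold Bz. destruct (k <? 0)%Z. lra. apply pos_INR. Qed.
Lemma Bz_n0 n : Bz n 0 = 1.
Proof. unfold Bz. simpl. rewrite bin_0. auto. Qed.

Lemma fsum_split' a n f : (a <= n)%nat -> fsum n f = fsum a f + fsum (n - a) (fun i => f (a + i)%nat).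
Proof. intros H. rewrite <- fsum_split. f_equal. lia. Qed.


Lemma bin_abs n k : ((k+1) * bin (S n) (S k) = (S n) * bin n k)%nat.
Proof. revert k; induction n; intros k.
 - destruct k; simpl; auto.
 - change (bin (S (S n)) (S k)) with (bin (S n) k + bin (S n) (S k))%nat.
   destruct k. pose proof (IHn 0%nat). simpl in *. rewrite !bin_0 in *. lia.
   change (bin (S n) (S k)) with (bin n k + bin n (S k))%nat.
   pose proof (IHn k). pose proof (IHn (S k)).
   change (bin (S n) (S (S k))) with (bin n (S k) + bin n (S (S k)))%nat in *. change (bin (S n) (S k)) with (bin n k + bin n (S k))%nat in H. nia.
Qed.

Lemma bin_abs2 n k : ((k+1) * bin n (S k) = (n - k) * bin n k)%nat.
Proof. pose proof (bin_abs n k). change (bin (S n) (S k)) with (bin n k + bin n (S k))%nat in H.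
 destruct (Nat.le_gt_cases k n). nia. rewrite !bin_gt by lia. lia. Qed.

Lemma Bz_S n k : (0 <= k)%Z -> Bz (S n) (k + 1) * (IZR k + 1) = INR (S n) * Bz n k.
Proof. intros Hk. unfold Bz. destruct (Z.ltb_spec (k+1) 0); try lia. destruct (Z.ltb_spec k 0); try lia.
 replace (Z.to_nat (k+1)) with (S (Z.to_nat k)) by lia.
 pose proof (bin_abs n (Z.to_nat k)). apply (f_equal INR) in H1. rewrite !mult_INR in H1.
 rewrite <- H1. rewrite plus_INR, (INR_IZR_INZ (Z.to_nat k)), Z2Nat.id by lia. simpl. ring. Qed.

Lemma Bz_S2 n k : (0 <= k)%Z -> Bz n (k + 1) * (IZR k + 1) = (INR n - IZR k) * Bz n k.
Proof. intros Hk. unfold Bz. destruct (Z.ltb_spec (k+1) 0); try lia. destruct (Z.ltb_spec k 0); try lia.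
 replace (Z.to_nat (k+1)) with (S (Z.to_nat k)) by lia.
 pose proof (bin_abs2 n (Z.to_nat k)). apply (f_equal INR) in H1. rewrite !mult_INR in H1.
 destruct (Nat.le_gt_cases (Z.to_nat k) n).
 - rewrite minus_INR in H1 by lia. rewrite plus_INR, (INR_IZR_INZ (Z.to_nat k)), Z2Nat.id in H1 by lia. simpl in H1.
   lra.
 - rewrite !bin_gt by lia. simpl. lra.
Qed.

Lemma Bz_0 k : (0 < k)%Z -> Bz 0 k = 0.
Proof. intros; apply Bz_big; simpl; lia. Qed.

Definition T (d s e k : nat) : R :=
  Bz (d + k) (Z.of_nat k) * Bz (s + d) (Z.of_nat d - Z.of_nat k) * Bz e (Z.of_nat k).
Definition Phi (d s e : nat) : R := fsum (S d) (T d s e).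

Lemma Phi_ext d s e K : (S d <= K)%nat -> Phi d s e = fsum K (T d s e).
Proof. intros H. symmetry. apply fsum_trunc; auto. intros i Hi. unfold T.
 rewrite (Bz_neg (s+d)). lra. lia. Qed.

Definition Xs (d sg e : nat) : R :=
  fsum (S (S d)) (fun k => Bz (S d + k) (Z.of_nat k) * Bz (sg + d) (Z.of_nat (S d) - Z.of_nat k) * Bz e (Z.of_nat k)).

Lemma Xs_Phi d s e : Xs d (S s) e = Phi (S d) s e.
Proof. unfold Xs, Phi, T. apply fsum_ext. intros. f_equal. f_equal. f_equal. lia. Qed.

Definition Zf (d sg e : nat) : R :=
  fsum (S (S d)) (fun k => Bz (S d + k) (Z.of_nat k) * Bz (sg + d) (Z.of_nat d - Z.of_nat k) * Bz e (Z.of_nat k)).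

Lemma Xs_diff d sg e : Xs d (S sg) e - Xs d sg e = Zf d sg e.
Proof. unfold Xs, Zf. rewrite <- fsum_minus. apply fsum_ext. intros k Hk.
 replace (Z.of_nat (S d) - Z.of_nat k)%Z with ((Z.of_nat d - Z.of_nat k) + 1)%Z by lia.
 replace (S sg + d)%nat with (S (sg + d)) by lia. rewrite Bz_pascal. ring. Qed.

Lemma Bz_pascal' n k : Bz (S n) k = Bz n (k - 1) + Bz n k.
Proof. replace k with ((k - 1) + 1)%Z at 1 3 by lia. apply Bz_pascal. Qed.

Lemma Zf_diff d sg e : Zf d sg (S e) - Zf d (S sg) e =
  fsum (S (S d)) (fun k => Bz (S d + k) (Z.of_nat k) *
     (Bz (sg + d) (Z.of_nat d - Z.of_nat k) * Bz e (Z.of_nat k - 1)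
      - Bz (sg + d) (Z.of_nat d - Z.of_nat k - 1) * Bz e (Z.of_nat k))).
Proof. unfold Zf. rewrite <- fsum_minus. apply fsum_ext. intros k Hk.
 rewrite (Bz_pascal' e). replace (S sg + d)%nat with (S (sg + d)) by lia. rewrite (Bz_pascal' (sg + d)). ring. Qed.

Lemma Phi_diff d s e : Phi d s (S e) - Phi d s e =
  fsum (S (S d)) (fun k => Bz (d + k) (Z.of_nat k) * Bz (s + d) (Z.of_nat d - Z.of_nat k) * Bz e (Z.of_nat k - 1)).
Proof. rewrite !(Phi_ext d s _ (S (S d))) by lia. unfold T. rewrite <- fsum_minus. apply fsum_ext. intros k Hk.
 rewrite (Bz_pascal' e). ring. Qed.

Lemma XsA d sg e : Xs d (S sg) (S e) - Xs d sg (S e) - Xs d (S (S sg)) e + Xs d (S sg) e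
  = Phi d sg (S e) - Phi d sg e.
Proof.
 replace (Xs d (S sg) (S e) - Xs d sg (S e) - Xs d (S (S sg)) e + Xs d (S sg) e)
   with ((Xs d (S sg) (S e) - Xs d sg (S e)) - (Xs d (S (S sg)) e - Xs d (S sg) e)) by ring.
 rewrite !Xs_diff, Zf_diff, Phi_diff.
 assert (E1: forall k, Bz (S d + k) (Z.of_nat k) = Bz (d + k) (Z.of_nat k - 1) + Bz (d + k) (Z.of_nat k)).
 { intros k. apply Bz_pascal'. }
 apply Rminus_diag_uniq.
 rewrite <- fsum_minus.
 rewrite (fsum_ext _ _ (fun k =>
   Bz (d + k) (Z.of_nat k - 1) * Bz (sg + d) (Z.of_nat d - Z.of_nat k) * Bz e (Z.of_nat k - 1)
   - Bz (S d + k) (Z.of_nat k) * Bz (sg + d) (Z.of_nat d - Z.of_nat k - 1) * Bz e (Z.of_nat k))).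
 2:{ intros k Hk. rewrite E1. ring. }
 rewrite fsum_minus. apply Rminus_diag_eq.
 rewrite fsum_shift. rewrite (Bz_neg e (Z.of_nat 0 - 1)) by lia. rewrite Rmult_0_r, Rplus_0_l.
 rewrite (fsum_S (S d)). rewrite (Bz_neg (sg + d) (Z.of_nat d - Z.of_nat (S d) - 1)) by lia.
 rewrite Rmult_0_r, Rmult_0_l, Rplus_0_r.
 apply fsum_ext. intros k Hk. replace (Z.of_nat (S k) - 1)%Z with (Z.of_nat k) by lia.
 replace (d + S k)%nat with (S d + k)%nat by lia.
 replace (Z.of_nat d - Z.of_nat (S k))%Z with (Z.of_nat d - Z.of_nat k - 1)%Z by lia. ring.
Qed.

Lemma bin_sym a b : bin (a + b) a = bin (a + b) b.
Proof. revert b; induction a; intros b.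
 - simpl. rewrite bin_0, bin_nn. auto.
 - induction b.
   + rewrite Nat.add_0_r, bin_0, bin_nn. auto.
   + replace (S a + S b)%nat with (S (a + S b)) by lia. simpl bin.
     rewrite (IHa (S b)). replace (a + S b)%nat with (S a + b)%nat by lia. rewrite IHb. lia.
Qed.

Lemma Bz_sym d j : (0 <= j)%Z -> Bz d (Z.of_nat d - j) = Bz d j.
Proof. intros Hj. destruct (Z_lt_le_dec (Z.of_nat d) j).
 - rewrite Bz_neg by lia. rewrite Bz_big by lia. auto.
 - unfold Bz. destruct (Z.ltb_spec (Z.of_nat d - j) 0); try lia. destruct (Z.ltb_spec j 0); try lia.
   f_equal. set (a := Z.to_nat (Z.of_nat d - j)). set (b := Z.to_nat j).
   replace d with (a + b)%nat by (unfold a, b; lia). rewrite bin_sym. auto.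
Qed.

Lemma I4_term d j : (0 <= j)%Z ->
  Bz (S (S d) + Z.to_nat j) (j + 1) * Bz d j = Bz (S d + Z.to_nat j) j * (Bz d (j + 1) + 2 * Bz d j).
Proof. intros Hj. apply (Rmult_eq_reg_r (IZR j + 1)). 2:{ apply IZR_le in Hj. lra. }
 replace (S (S d) + Z.to_nat j)%nat with (S (S d + Z.to_nat j)) by lia.
 replace (Bz (S (S d + Z.to_nat j)) (j + 1) * Bz d j * (IZR j + 1))
   with (Bz (S (S d + Z.to_nat j)) (j + 1) * (IZR j + 1) * Bz d j) by ring.
 rewrite Bz_S by auto.
 replace (Bz (S d + Z.to_nat j) j * (Bz d (j + 1) + 2 * Bz d j) * (IZR j + 1))
   with (Bz (S d + Z.to_nat j) j * (Bz d (j + 1) * (IZR j + 1) + 2 * Bz d j * (IZR j + 1))) by ring.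
 rewrite Bz_S2 by auto. rewrite S_INR, plus_INR, S_INR, (INR_IZR_INZ (Z.to_nat j)), Z2Nat.id by lia. ring.
Qed.

Lemma XsI4 d e : Xs d 0 (S e) = Xs d 2 e.
Proof. unfold Xs. apply Rminus_diag_uniq. rewrite <- fsum_minus.
 rewrite (fsum_ext _ _ (fun k => Bz (S d + k) (Z.of_nat k) * Bz d (Z.of_nat (S d) - Z.of_nat k) * Bz e (Z.of_nat k - 1)
    - Bz (S d + k) (Z.of_nat k) * (Bz d (Z.of_nat d - Z.of_nat k - 1) + 2 * Bz d (Z.of_nat d - Z.of_nat k)) * Bz e (Z.of_nat k))).
 2:{ intros k Hk. rewrite (Bz_pascal' e). replace (2 + d)%nat with (S (S d)) by lia.
     rewrite (Bz_pascal' (S d)). rewrite !(Bz_pascal' d). simpl plus.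
     replace (Z.of_nat (S d) - Z.of_nat k - 1)%Z with (Z.of_nat d - Z.of_nat k)%Z by lia.
     replace (Z.of_nat (S d) - Z.of_nat k - 1 - 1)%Z with (Z.of_nat d - Z.of_nat k - 1)%Z by lia.
     ring. }
 rewrite fsum_minus. apply Rminus_diag_eq.
 rewrite fsum_shift. rewrite (Bz_neg e (Z.of_nat 0 - 1)) by lia. rewrite Rmult_0_r, Rplus_0_l.
 rewrite (fsum_S (S d)). rewrite (Bz_neg d (Z.of_nat d - Z.of_nat (S d) - 1)) by lia.
 rewrite (Bz_neg d (Z.of_nat d - Z.of_nat (S d))) by lia.
 rewrite Rmult_0_r, Rplus_0_l, Rmult_0_r, Rmult_0_l, Rplus_0_r.
 apply fsum_ext. intros k Hk.
 replace (Z.of_nat (S k) - 1)%Z with (Z.of_nat k) by lia.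
 replace (Z.of_nat (S d) - Z.of_nat (S k))%Z with (Z.of_nat d - Z.of_nat k)%Z by lia.
 replace (Z.of_nat d - Z.of_nat k - 1)%Z with (Z.of_nat d - (Z.of_nat k + 1))%Z by lia.
 rewrite !Bz_sym by lia.
 pose proof (I4_term d (Z.of_nat k) ltac:(lia)). rewrite Nat2Z.id in H.
 replace (S d + S k)%nat with (S (S d) + k)%nat by lia. replace (Z.of_nat (S k)) with (Z.of_nat k + 1)%Z by lia.
 rewrite H. ring.
Qed.

Definition Rr (d s e : nat) : R :=
  fsum (S s) (fun t => Phi d t e) + fsum e (fun j => Phi d (S s + j) (e - 1 - j))
  + fsum e (fun j => Phi d (S j) (e - 1 - j)).

Lemma A_step d s e : fsum (S e) (fun j => Phi d (S s + j) (S e - 1 - j))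
  = Phi d (S s) e + fsum e (fun j => Phi d (S (S s) + j) (e - 1 - j)).
Proof. rewrite fsum_shift. f_equal. f_equal; lia. apply fsum_ext; intros. f_equal; lia. Qed.

Lemma RR1 d s e : Rr d (S s) (S e) - Rr d s (S e) - Rr d (S (S s)) e + Rr d (S s) e
  = Phi d (S s) (S e) - Phi d (S s) e.
Proof. unfold Rr. rewrite !A_step.
 rewrite (fsum_S (S s) (fun t => Phi d t (S e))). rewrite (fsum_S (S (S s)) (fun t => Phi d t e)).
 ring. Qed.

Lemma RR0 d e : Rr d 0 (S e) - 2 * Rr d 1 e + Rr d 0 e = Phi d 0 (S e) - Phi d 0 e.
Proof. unfold Rr.
 assert (H: fsum (S e) (fun j => Phi d (S j) (S e - 1 - j)) = fsum (S e) (fun j => Phi d (S 0 + j) (S e - 1 - j))) by reflexivity.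
 rewrite H, A_step.
 assert (H2: fsum e (fun j => Phi d (S 0 + j) (e - 1 - j)) = fsum e (fun j => Phi d (S j) (e - 1 - j))) by reflexivity.
 rewrite H2. simpl fsum. ring. Qed.

Lemma Bz_nn n : Bz n (Z.of_nat n) = 1.
Proof. unfold Bz. destruct (Z.ltb_spec (Z.of_nat n) 0); try lia. rewrite Nat2Z.id, bin_nn. auto. Qed.

Lemma Phi_e0 d s : Phi d s 0 = Bz (s + d) (Z.of_nat d).
Proof. unfold Phi. rewrite fsum_shift, fsum_zero. unfold T. rewrite Nat.add_0_r.
 replace (Z.of_nat 0) with 0%Z by auto. rewrite !Bz_n0. replace (Z.of_nat d - 0)%Z with (Z.of_nat d) by lia. ring.
 intros i Hi; unfold T; rewrite (Bz_0 (Z.of_nat (S i))) by lia; ring. Qed.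

Lemma hockey d s : Bz (s + S d) (Z.of_nat (S d)) = fsum (S s) (fun t => Bz (t + d) (Z.of_nat d)).
Proof. induction s.
 - cbn [fsum Nat.add]. rewrite !Bz_nn. ring.
 - rewrite fsum_S, <- IHs. replace (S s + S d)%nat with (S (s + S d)) by lia. rewrite Bz_pascal'.
   replace (Z.of_nat (S d) - 1)%Z with (Z.of_nat d) by lia. replace (S s + d)%nat with (s + S d)%nat by lia. ring.
Qed.

Lemma Phi_S_eq d s e : Phi (S d) s e = Rr d s e.
Proof.
 revert s. induction e as [|e IHe]; intros s.
 - unfold Rr. simpl (fsum 0 _). rewrite !Rplus_0_r. rewrite Phi_e0, hockey.
   apply fsum_ext; intros. rewrite Phi_e0. auto.
 - induction s.
   + pose proof (XsA d 0 e). rewrite XsI4 in H. rewrite !Xs_Phi in H.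
     pose proof (RR0 d e). rewrite !IHe in H. lra.
   + pose proof (XsA d (S s) e). rewrite !Xs_Phi in H.
     pose proof (RR1 d s e). rewrite !IHe in H. rewrite IHs in H. lra.
Qed.


Fixpoint costZ (d : nat) (a : nat -> Z) (s : Z) : Z :=
  match d with O => Z.abs s | S d' => (costZ d' a (a d') + Z.abs (s - a d'))%Z end.

Lemma costZ_ext d a b s : (forall m, (m < d)%nat -> a m = b m) -> costZ d a s = costZ d b s.
Proof. revert s; induction d; intros s H; simpl; auto. rewrite H by lia. rewrite IHd; auto. Qed.

Lemma gsum_ext d L F G : (forall a, F a = G a) -> gsum d L F = gsum d L G.
Proof. revert F G; induction d; intros F G H; simpl; auto. apply fsum_ext; intros. apply IHd. intros; apply H. Qed.

Lemma gsum_le d L F G : (forall a, F a <= G a) -> gsum d L F <= gsum d L G.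
Proof. revert F G; induction d; intros F G H; simpl; auto. apply fsum_le; intros. apply IHd. intros; apply H. Qed.

Lemma ind_iff (P Q : Prop) : (P <-> Q) -> Defs.ind P = Defs.ind Q.
Proof. intros H. unfold Defs.ind. destruct (ClassicalEpsilon.excluded_middle_informative P), (ClassicalEpsilon.excluded_middle_informative Q); tauto. Qed.

Lemma ind_le (P Q : Prop) : (P -> Q) -> Defs.ind P <= Defs.ind Q.
Proof. intros H. unfold Defs.ind. destruct (ClassicalEpsilon.excluded_middle_informative P), (ClassicalEpsilon.excluded_middle_informative Q); try lra. tauto. Qed.

Lemma ind_nonneg P : 0 <= Defs.ind P.
Proof. unfold Defs.ind. destruct (ClassicalEpsilon.excluded_middle_informative P); lra. Qed.

Definition cnt d L s r := gsum d L (fun a => Defs.ind (costZ d a s <= r)%Z).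

Lemma cnt_S d L s r : cnt (S d) L s r =
  fsum (2 * L) (fun t => cnt d L (Z.of_nat t - Z.of_nat L) (r - Z.abs (s - (Z.of_nat t - Z.of_nat L)))).
Proof. unfold cnt. simpl gsum. apply fsum_ext. intros t Ht. apply gsum_ext. intros a.
 apply ind_iff. simpl costZ. rewrite Nat.eqb_refl.
 rewrite (costZ_ext d (fun m => if Nat.eqb m d then (Z.of_nat t - Z.of_nat L)%Z else a m) a).
 lia. intros m Hm. destruct (Nat.eqb_spec m d); lia || auto. Qed.

Definition Hf (d : nat) (s r : Z) : R :=
  if (Z.abs s <=? r)%Z then Phi d (Z.to_nat (Z.abs s)) (Z.to_nat ((r - Z.abs s) / 2)) else 0.

Lemma Hf_zero d s r : (r < Z.abs s)%Z -> Hf d s r = 0.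
Proof. intros; unfold Hf. destruct (Z.leb_spec (Z.abs s) r); lia || auto. Qed.

Lemma Hf_val d s r m : (Z.abs s + 2 * Z.of_nat m <= r < Z.abs s + 2 * Z.of_nat m + 2)%Z ->
  Hf d s r = Phi d (Z.to_nat (Z.abs s)) m.
Proof. intros H; unfold Hf. destruct (Z.leb_spec (Z.abs s) r); try lia. f_equal.
 assert ((r - Z.abs s) / 2 = Z.of_nat m)%Z by (symmetry; apply Z.div_unique with (r - Z.abs s - 2 * Z.of_nat m)%Z; lia).
 rewrite H1. lia. Qed.

Lemma Hf_opp d s r : Hf d (- s) r = Hf d s r.
Proof. unfold Hf. rewrite Z.abs_opp. auto. Qed.

Lemma fsum_refl (g : Z -> R) (L : nat) :
  fsum (2 * L) (fun t => g (Z.of_nat t - Z.of_nat L)%Z) =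
  g (- Z.of_nat L)%Z - g (Z.of_nat L) + fsum (2 * L) (fun t => g (Z.of_nat L - Z.of_nat t)%Z).
Proof.
 rewrite (fsum_rev (2 * L) (fun t => g (Z.of_nat L - Z.of_nat t)%Z)).
 assert (H1 := fsum_shift (2 * L) (fun t => g (Z.of_nat t - Z.of_nat L)%Z)).
 rewrite fsum_S in H1.
 rewrite (fsum_ext (2 * L) (fun i => g (Z.of_nat L - Z.of_nat (2 * L - 1 - i))%Z)
     (fun i => g (Z.of_nat (S i) - Z.of_nat L)%Z)).
 2:{ intros i Hi. f_equal. lia. }
 replace (Z.of_nat 0 - Z.of_nat L)%Z with (- Z.of_nat L)%Z in H1 by lia.
 replace (Z.of_nat (2 * L) - Z.of_nat L)%Z with (Z.of_nat L)%Z in H1 by lia.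
 lra.
Qed.

Lemma sum_pos d (s r : Z) (L : nat) : (0 <= s)%Z -> (s <= r)%Z -> (s + r < Z.of_nat L)%Z ->
  fsum (2 * L) (fun t => Hf d (Z.of_nat t - Z.of_nat L) (r - Z.abs (s - (Z.of_nat t - Z.of_nat L))))
  = Hf (S d) s r.
Proof. intros H0 H1 H2.
 set (sn := Z.to_nat s). set (e := Z.to_nat ((r - s) / 2)).
 assert (Hs : s = Z.of_nat sn) by (unfold sn; lia).
 assert (He : (2 * Z.of_nat e <= r - s < 2 * Z.of_nat e + 2)%Z).
 { unfold e. rewrite Z2Nat.id. pose proof (Z.mul_div_le (r - s) 2). pose proof (Z.mod_pos_bound (r-s) 2).
   pose proof (Z.div_mod (r-s) 2). lia. apply Z.div_pos; lia. }
 rewrite (Hf_val (S d) s r e) by lia. replace (Z.to_nat (Z.abs s)) with sn by (unfold sn; lia).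
 rewrite Phi_S_eq. unfold Rr.
 replace (2 * L)%nat with (L + L)%nat by lia. rewrite fsum_split.
 rewrite fsum_rev.
 rewrite (fsum_trunc L e) by (try lia; intros i Hi; apply Hf_zero; lia).
 rewrite (fsum_ext e _ (fun j => Phi d (S j) (e - 1 - j))).
 2:{ intros j Hj. rewrite (Hf_val d _ _ (e - 1 - j)) by lia. f_equal. lia. }
 rewrite (fsum_split' (S sn) L) by lia.
 rewrite (fsum_ext (S sn) _ (fun t => Phi d t e)).
 2:{ intros t Ht. rewrite (Hf_val d _ _ e) by lia. f_equal. lia. }
 rewrite (fsum_trunc (L - S sn) e) by (try lia; intros i Hi; apply Hf_zero; lia).
 match goal with |- _ + (_ + fsum e ?g) = _ => rewrite (fsum_ext e g (fun j => Phi d (S sn + j) (e - 1 - j))) end.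
 2:{ intros j Hj. rewrite (Hf_val d _ _ (e - 1 - j)) by lia. f_equal. lia. }
 ring.
Qed.

Lemma sum_all d (s r : Z) (L : nat) : (Z.abs s + r < Z.of_nat L)%Z ->
  fsum (2 * L) (fun t => Hf d (Z.of_nat t - Z.of_nat L) (r - Z.abs (s - (Z.of_nat t - Z.of_nat L))))
  = Hf (S d) s r.
Proof. intros H.
 destruct (Z_lt_le_dec r (Z.abs s)).
 - rewrite Hf_zero by lia. apply fsum_zero. intros i Hi. apply Hf_zero. lia.
 - destruct (Z_le_gt_dec 0 s). apply sum_pos; lia.
   rewrite (fsum_refl (fun t' => Hf d t' (r - Z.abs (s - t')))).
   rewrite !Hf_zero by lia. rewrite Rminus_0_r, Rplus_0_l.
   rewrite (fsum_ext _ _ (fun t => Hf d (Z.of_nat t - Z.of_nat L) (r - Z.abs (- s - (Z.of_nat t - Z.of_nat L))))).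
   2:{ intros i Hi. rewrite <- Hf_opp. f_equal; lia. }
   rewrite sum_pos by lia. rewrite <- Hf_opp. f_equal. lia.
Qed.

Lemma Phi_0 s e : Phi 0 s e = 1.
Proof. unfold Phi, T. simpl. rewrite !Nat.add_0_r. replace (0 - 0)%Z with 0%Z by lia. rewrite !Bz_n0. ring. Qed.

Lemma cnt_eq d L s r : (Z.abs s + r < Z.of_nat L)%Z -> cnt d L s r = Hf d s r.
Proof. revert s r; induction d; intros s r H.
 - unfold cnt. simpl. unfold Hf. rewrite Phi_0. unfold Defs.ind.
   destruct (ClassicalEpsilon.excluded_middle_informative (Z.abs s <= r)%Z);
   destruct (Z.leb_spec (Z.abs s) r); lia || auto.
 - rewrite cnt_S. rewrite <- (sum_all d s r L) by auto. apply fsum_ext. intros t Ht. apply IHd. lia.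
Qed.


Fixpoint costR (d : nat) (x : nat -> R) (s : R) : R :=
  match d with O => Rabs s | S d' => costR d' x (x d') + Rabs (s - x d') end.

Lemma costR_ext d x y s : (forall m, (m < d)%nat -> x m = y m) -> costR d x s = costR d y s.
Proof. revert s; induction d; intros s H; simpl; auto. rewrite H by lia. rewrite IHd; auto. Qed.

Lemma costR_scale d c x s : costR d (fun m => c * x m) (c * s) = Rabs c * costR d x s.
Proof. revert s; induction d; intros s; simpl. apply Rabs_mult.
 rewrite IHd. replace (c * s - c * x d) with (c * (s - x d)) by ring. rewrite Rabs_mult. ring. Qed.

Lemma costR_sub d x y s t : costR d (fun m => x m + y m) (s + t) <= costR d x s + costR d y t.
Proof. revert s t; induction d; intros s t; simpl. apply Rabs_triang.
 pose proof (IHd (x d) (y d)).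
 replace (s + t - (x d + y d)) with ((s - x d) + (t - y d)) by ring.
 pose proof (Rabs_triang (s - x d) (t - y d)). lra. Qed.

Lemma costR_zero d : costR d (fun _ => 0) 0 = 0.
Proof. induction d; simpl. apply Rabs_R0. rewrite IHd. rewrite Rminus_0_r, Rabs_R0. ring. Qed.

Lemma costR_fsum d N (f : nat -> nat -> R) (g : nat -> R) :
  costR d (fun m => fsum N (fun i => f i m)) (fsum N g) <= fsum N (fun i => costR d (f i) (g i)).
Proof. induction N; simpl. rewrite costR_zero. lra.
 eapply Rle_trans. apply (costR_sub d (fun m => fsum N (fun i => f i m)) (f N)). lra. Qed.

Lemma costR_ge d x s : Rabs s <= costR d x s.
Proof. revert s; induction d; intros s; simpl. lra. pose proof (IHd (x d)).
 pose proof (Rabs_triang (x d) (s - x d)). replace (x d + (s - x d)) with s in H0 by ring. lra. Qed.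

Lemma costR_ge2 d x s m : (m < d)%nat -> Rabs (x m) + Rabs (s - x m) <= costR d x s.
Proof. revert s; induction d; intros s Hm. lia. simpl.
 destruct (Nat.eq_dec m d). subst. pose proof (costR_ge d x (x d)). lra.
 pose proof (IHd (x d) ltac:(lia)).
 pose proof (Rabs_triang (s - x d) (x d - x m)). replace (s - x d + (x d - x m)) with (s - x m) in H0 by ring. lra. Qed.

Lemma costR_bound d y s : costR d y s <= Rabs s + 2 * fsum d (fun m => Rabs (y m)).
Proof. revert s; induction d; intros s; simpl. lra. pose proof (IHd (y d)).
 pose proof (Rabs_triang s (- y d)). rewrite Rabs_Ropp in H0. unfold Rminus. lra. Qed.

Lemma costR_root i j d s : (i <= j)%nat -> costR d (rootc i j) s =
  if Nat.leb d i then Rabs s else if Nat.leb d (S j) then 1 + Rabs (s - 1) else 2 + Rabs s.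
Proof. intros Hij. revert s; induction d; intros s. simpl. auto.
 simpl costR. rewrite IHd. unfold rootc.
 destruct (Nat.leb_spec (S d) i); destruct (Nat.leb_spec d i); destruct (Nat.leb_spec i d);
 destruct (Nat.leb_spec d j); destruct (Nat.leb_spec (S d) (S j)); destruct (Nat.leb_spec d (S j));
 simpl; try lia;
 try (rewrite Rabs_R0; ring); try (rewrite Rabs_R1; ring);
 try (replace (1 - 1) with 0 by ring; rewrite Rabs_R0; ring);
 try (replace (0 - 1) with (-1) by ring; rewrite Rabs_Ropp, Rabs_R1; ring);
 try (rewrite Rminus_0_r; rewrite Rabs_R0; ring).
 all: try (rewrite Rminus_0_r; ring).
 all: try (replace (0 - 1) with (-1) by ring; rewrite Rabs_Ropp, Rabs_R1, Rminus_0_r; ring).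
  rewrite Rminus_0_r, (Rabs_left (0 - 1)) by lra. ring.
Qed.

Lemma costR_root_n n i j : (i <= j)%nat -> (j < n)%nat -> costR n (rootc i j) 0 = 2.
Proof. intros. rewrite costR_root by auto. destruct (Nat.leb_spec n i); try lia.
 destruct (Nat.leb_spec n (S j)). rewrite (Rabs_left (0 - 1)) by lra. ring. rewrite Rabs_R0. ring. Qed.

Lemma inCA_cost n x : in_CA n x -> costR n x 0 <= 2.
Proof. intros (w & v & Hwv & Hsum & Hx).
 rewrite (costR_ext n x (fun k => fsum n (fun i => fsum n (fun j => if Nat.leb i j then (w i j - v i j) * rootc i j k else 0)))) by auto.
 match goal with |- costR n ?F 0 <= _ => replace (costR n F 0) with (costR n F (fsum n (fun i => fsum n (fun j => 0)))) by (rewrite fsum_zero; auto; intros; apply fsum_0) end.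
 eapply Rle_trans. apply (costR_fsum n n (fun i k => fsum n (fun j => if Nat.leb i j then (w i j - v i j) * rootc i j k else 0))).
 eapply Rle_trans. apply fsum_le. intros i Hi. apply (costR_fsum n n (fun j k => if Nat.leb i j then (w i j - v i j) * rootc i j k else 0)).
 replace 2 with (2 * 1) by ring. rewrite <- Hsum. rewrite <- fsum_scal. apply fsum_le. intros i Hi. rewrite <- fsum_scal. apply fsum_le. intros j Hj.
 destruct (Nat.leb_spec i j).
 - replace 0 with ((w i j - v i j) * 0) by ring. rewrite costR_scale, costR_root_n by auto.
   destruct (Hwv i j). pose proof (Rabs_triang (w i j) (- v i j)). rewrite Rabs_Ropp in H2.
   rewrite (Rabs_right (w i j)), (Rabs_right (v i j)) in H2 by lra. unfold Rminus. lra.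
 - rewrite costR_zero. lra.
Qed.

Lemma cost_coord n x m : (m < n)%nat -> costR n x 0 <= 2 -> Rabs (x m) <= 1.
Proof. intros Hm H. pose proof (costR_ge2 n x 0 m Hm). rewrite Rminus_0_l, Rabs_Ropp in H0. lra. Qed.


Definition pv (x : nat -> R) (k : nat) : R := match k with O => 0 | S k' => x k' end.

Lemma costR_sum d x s : costR d x s = fsum d (fun k => Rabs (x k - pv x k)) + Rabs (s - pv x d).
Proof. revert s; induction d; intros s; simpl. rewrite Rminus_0_r; ring. rewrite IHd. ring. Qed.

Lemma fsum_prod n m f g : fsum n (fun i => fsum m (fun j => f i * g j)) = fsum n f * fsum m g.
Proof. rewrite <- fsum_scalr. apply fsum_ext. intros. apply fsum_scal. Qed.

Lemma tri (h : nat -> nat -> R) n :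
  fsum (S n) (fun a => fsum (S n) (fun b => if Nat.ltb a b then h a b else 0)) =
  fsum n (fun i => fsum n (fun j => if Nat.leb i j then h i (S j) else 0)).
Proof. rewrite fsum_S. rewrite (fsum_zero (S n) (fun b => if Nat.ltb n b then h n b else 0)).
 2:{ intros i Hi. destruct (Nat.ltb_spec n i); lia || auto. }
 rewrite Rplus_0_r. apply fsum_ext. intros i Hi. rewrite fsum_shift. destruct (Nat.ltb_spec i 0); try lia.
 rewrite Rplus_0_l. apply fsum_ext. intros j Hj. destruct (Nat.ltb_spec i (S j)), (Nat.leb_spec i j); lia || auto. Qed.

Lemma ind_lo n k f : (k < n)%nat -> fsum n (fun i => if Nat.leb i k then f i else 0) = fsum (S k) f.
Proof. intros H. rewrite (fsum_split' (S k) n) by lia. rewrite (fsum_zero (n - S k)). rewrite Rplus_0_r.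
 apply fsum_ext. intros i Hi. destruct (Nat.leb_spec i k); lia || auto.
 intros i Hi. destruct (Nat.leb_spec (S k + i) k); lia || auto. Qed.

Lemma ind_hi n k f : (k < n)%nat -> fsum n (fun j => if Nat.leb k j then f (S j) else 0) = fsum (S n) f - fsum (S k) f.
Proof. intros H. rewrite (fsum_split' k n) by lia. rewrite (fsum_split' (S k) (S n)) by lia.
 rewrite (fsum_zero k). replace (S n - S k)%nat with (n - k)%nat by lia.
 assert (fsum (n - k) (fun i => if Nat.leb k (k + i) then f (S (k + i)) else 0) = fsum (n - k) (fun i => f (S k + i)%nat)).
 { apply fsum_ext. intros. destruct (Nat.leb_spec k (k + i)); try lia. f_equal. }
 rewrite H0. ring.
 intros i Hi. destruct (Nat.leb_spec k i); lia || auto. Qed.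

Section Conv.
Variable n : nat.
Variable x : nat -> R.
Definition xe (k : nat) : R := if Nat.ltb k n then x k else 0.
Definition zz (k : nat) : R := xe k - pv xe k.
Definition pp (k : nat) : R := Rmax (zz k) 0.
Definition qq (k : nat) : R := Rmax (- zz k) 0.
Definition SS : R := fsum (S n) pp.

Lemma tele k : fsum (S k) zz = xe k.
Proof. induction k. simpl. unfold zz. simpl. ring. rewrite fsum_S, IHk. unfold zz. simpl. ring. Qed.

Lemma pq_facts k : zz k = pp k - qq k /\ Rabs (zz k) = pp k + qq k /\ pp k * qq k = 0 /\ 0 <= pp k /\ 0 <= qq k.
Proof. unfold pp, qq. destruct (Rle_dec 0 (zz k)).
 - rewrite Rmax_left by lra. rewrite Rmax_right by lra. rewrite Rabs_right by lra. repeat split; lra.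
 - rewrite Rmax_right by lra. rewrite Rmax_left by lra. rewrite Rabs_left by lra. repeat split; lra. Qed.

Lemma sumq : fsum (S n) qq = SS.
Proof. unfold SS. pose proof (tele n). unfold xe in H at 1. destruct (Nat.ltb_spec n n); try lia.
 assert (fsum (S n) zz = fsum (S n) pp - fsum (S n) qq). { rewrite <- fsum_minus. apply fsum_ext. intros. apply pq_facts. }
 lra. Qed.

Lemma cost_SS : costR n x 0 = 2 * SS.
Proof. rewrite (costR_ext n x xe). 2:{ intros m Hm. unfold xe. destruct (Nat.ltb_spec m n); lia || auto. }
 rewrite costR_sum.
 assert (E: Rabs (0 - pv xe n) = Rabs (zz n)). { unfold zz. replace (xe n) with 0; auto. unfold xe. destruct (Nat.ltb_spec n n); lia || auto. }
 rewrite E. change (fsum n (fun k => Rabs (xe k - pv xe k)) + Rabs (zz n)) with (fsum (S n) (fun k => Rabs (zz k))).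
 rewrite (fsum_ext _ _ (fun i => pp i + qq i)). 2:{ intros. apply pq_facts. }
 rewrite fsum_plus, sumq. unfold SS. ring. Qed.

Lemma fsum_mono_n m k f : (m <= k)%nat -> (forall i, (i < k)%nat -> 0 <= f i) -> fsum m f <= fsum k f.
Proof. intros H1 H2. rewrite (fsum_split' m k) by auto. assert (0 <= fsum (k - m) (fun i => f (m + i)%nat)).
 apply fsum_nonneg. intros; apply H2; lia. lra. Qed.

Lemma dsum_pq : fsum n (fun i => fsum n (fun j => if Nat.leb i j then pp i * qq (S j) + pp (S j) * qq i else 0)) = SS * SS.
Proof.
 rewrite (fsum_ext _ _ (fun i => fsum n (fun j => if Nat.leb i j then pp i * qq (S j) else 0) + fsum n (fun j => if Nat.leb i j then pp (S j) * qq i else 0))).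
 2:{ intros i Hi. rewrite <- fsum_plus. apply fsum_ext. intros j Hj. destruct (Nat.leb i j); ring. }
 rewrite fsum_plus.
 rewrite <- (tri (fun a b => pp a * qq b)).
 rewrite <- (tri (fun b a => pp a * qq b)).
 rewrite (fsum_swap (S n) (S n) (fun b a => if Nat.ltb b a then pp a * qq b else 0)).
 rewrite <- fsum_plus.
 replace (SS * SS) with (fsum (S n) pp * fsum (S n) qq) by (rewrite sumq; unfold SS; ring). rewrite <- fsum_prod.
 apply fsum_ext. intros a Ha. rewrite <- fsum_plus. apply fsum_ext. intros b Hb.
 destruct (Nat.ltb_spec a b), (Nat.ltb_spec b a); try lia; try ring.
 assert (a = b) by lia. subst. destruct (pq_facts b) as (_ & _ & H3 & _). lra.
Qed.

Definition del (i j : nat) : R := if (Nat.eqb i 0 && Nat.eqb j 0)%bool then (1 - SS) / 2 else 0.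
Definition ww (i j : nat) : R := pp i * qq (S j) * / SS + del i j.
Definition vv (i j : nat) : R := pp (S j) * qq i * / SS + del i j.

Lemma SS_nonneg : 0 <= SS.
Proof. unfold SS. apply fsum_nonneg. intros; apply pq_facts. Qed.

Lemma dprod (F G H K : nat -> R) c :
  fsum n (fun i => fsum n (fun j => (F i * G j - H j * K i) * c)) = (fsum n F * fsum n G - fsum n H * fsum n K) * c.
Proof. rewrite (fsum_ext _ _ (fun i => (fsum n (fun j => F i * G j) - fsum n (fun j => K i * H j)) * c)).
 rewrite fsum_scalr, fsum_minus, !fsum_prod. ring.
 intros i Hi. rewrite <- fsum_minus, <- fsum_scalr. apply fsum_ext. intros. ring. Qed.

Lemma conv_inCA : (1 <= n)%nat -> costR n x 0 <= 2 -> in_CA n x.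
Proof. intros Hn Hc. rewrite cost_SS in Hc. pose proof SS_nonneg as HS.
 assert (HI : 0 <= / SS). { destruct (Req_dec SS 0). rewrite H, Rinv_0; lra. apply Rlt_le, Rinv_0_lt_compat. lra. }
 exists ww, vv. split; [|split].
 - intros i j. unfold ww, vv, del. destruct (pq_facts i) as (_&_&_&H1&H2). destruct (pq_facts (S j)) as (_&_&_&H3&H4).
   destruct (Nat.eqb i 0 && Nat.eqb j 0)%bool; split;
   (apply Rplus_le_le_0_compat; [repeat apply Rmult_le_pos; auto | lra]).
 - rewrite (fsum_ext _ _ (fun i => fsum n (fun j => (if Nat.leb i j then pp i * qq (S j) + pp (S j) * qq i else 0) * / SS
       + (if (Nat.eqb i 0 && Nat.eqb j 0)%bool then 1 - SS else 0)))).
   2:{ intros i Hi. apply fsum_ext. intros j Hj. unfold ww, vv, del.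
       destruct (Nat.leb_spec i j), (Nat.eqb_spec i 0), (Nat.eqb_spec j 0); simpl; try lia; try ring; lra. }
   rewrite (fsum_ext _ _ (fun i => fsum n (fun j => (if Nat.leb i j then pp i * qq (S j) + pp (S j) * qq i else 0)) * / SS
       + fsum n (fun j => if (Nat.eqb i 0 && Nat.eqb j 0)%bool then 1 - SS else 0))).
   2:{ intros i Hi. rewrite <- fsum_scalr, <- fsum_plus. auto. }
   rewrite fsum_plus, fsum_scalr, dsum_pq.
   destruct n as [|n']; try lia. rewrite fsum_shift. rewrite fsum_shift. simpl (Nat.eqb 0 0).
   rewrite fsum_zero. rewrite (fsum_zero n'). 
   simpl. destruct (Req_dec SS 0). rewrite H. ring. field. auto.
   intros i Hi. apply fsum_zero. intros j Hj. simpl. auto.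
   intros j Hj. simpl. auto.
 - intros k Hk.
   rewrite (fsum_ext _ _ (fun i => fsum n (fun j => ((if Nat.leb i k then pp i else 0) * (if Nat.leb k j then qq (S j) else 0)
      - (if Nat.leb k j then pp (S j) else 0) * (if Nat.leb i k then qq i else 0)) * / SS))).
   2:{ intros i Hi. apply fsum_ext. intros j Hj. unfold ww, vv, rootc.
       destruct (Nat.leb_spec i j), (Nat.leb_spec i k), (Nat.leb_spec k j); simpl; try lia; ring. }
   rewrite dprod. rewrite ind_lo, ind_hi, ind_hi, ind_lo by auto. rewrite sumq. fold SS.
   assert (Hx: x k = fsum (S k) pp - fsum (S k) qq).
   { rewrite <- fsum_minus. rewrite (fsum_ext _ _ zz). rewrite tele. unfold xe. destruct (Nat.ltb_spec k n); lia || auto.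
     intros. symmetry. apply pq_facts. }
   rewrite Hx.
   assert (HP: fsum (S k) pp <= SS). { apply fsum_mono_n. lia. intros; apply pq_facts. }
   assert (HQ: fsum (S k) qq <= SS). { rewrite <- sumq. apply fsum_mono_n. lia. intros; apply pq_facts. }
   assert (HP0: 0 <= fsum (S k) pp). { apply fsum_nonneg. intros; apply pq_facts. }
   assert (HQ0: 0 <= fsum (S k) qq). { apply fsum_nonneg. intros; apply pq_facts. }
   destruct (Req_dec SS 0).
   + assert (fsum (S k) pp = 0) by lra. assert (fsum (S k) qq = 0) by lra. rewrite H, H0, H1. ring.
   + field. auto.
Qed.

End Conv.


Lemma costR_Z d a s : IZR (costZ d a s) = costR d (fun m => IZR (a m)) (IZR s).
Proof. revert s; induction d; intros s; simpl. apply abs_IZR.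
 rewrite plus_IZR, IHd, abs_IZR, minus_IZR. auto. Qed.

Section Cube.
Variable n K : nat.
Hypothesis HK : (0 < K)%nat.
Hypothesis Hn : (1 <= n)%nat.
Variable a : nat -> Z.
Let aR := fun m => IZR (a m).

Lemma KposR : 0 < INR K.
Proof. apply lt_0_INR. auto. Qed.

Lemma cube_pt : in_cube n K a (fun m => IZR (a m) / INR K).
Proof. intros m Hm. pose proof KposR. split. lra. unfold Rdiv. apply Rmult_le_compat_r.
 left; apply Rinv_0_lt_compat; auto. lra. Qed.

Lemma cube_dist x : in_cube n K a x -> forall m, (m < n)%nat -> Rabs (INR K * x m - aR m) <= 1.
Proof. intros H m Hm. destruct (H m Hm) as [H1 H2]. pose proof KposR. unfold aR.
 apply Rmult_le_compat_l with (r := INR K) in H1; [|lra]. apply Rmult_le_compat_l with (r := INR K) in H2; [|lra].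
 replace (INR K * (IZR (a m) / INR K)) with (IZR (a m)) in H1 by (field; lra).
 replace (INR K * ((IZR (a m) + 1) / INR K)) with (IZR (a m) + 1) in H2 by (field; lra).
 apply Rabs_le. lra. Qed.

Lemma costR_sum_bound y : (forall m, (m < n)%nat -> Rabs (y m) <= 1) -> costR n y 0 <= 2 * INR n.
Proof. intros H. eapply Rle_trans. apply costR_bound. rewrite Rabs_R0.
 assert (fsum n (fun m => Rabs (y m)) <= fsum n (fun _ => 1)) by (apply fsum_le; auto).
 assert (forall k, fsum k (fun _ => 1) = INR k). { induction k. auto. rewrite fsum_S, IHk, S_INR. auto. }
 rewrite H1 in H0. lra. Qed.

Lemma cube_cost1 x : in_cube n K a x -> INR K * costR n x 0 <= costR n aR 0 + 2 * INR n.
Proof. intros H. pose proof KposR. rewrite <- (Rabs_right (INR K)) by lra.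
 rewrite <- costR_scale. rewrite Rmult_0_r.
 rewrite (costR_ext n (fun m => INR K * x m) (fun m => aR m + (INR K * x m - aR m))) by (intros; ring).
 replace 0 with (0 + 0) at 1 by ring. eapply Rle_trans. apply costR_sub.
 pose proof (costR_sum_bound (fun m => INR K * x m - aR m) (cube_dist x H)). lra. Qed.

Lemma cube_cost2 x : in_cube n K a x -> costR n aR 0 <= INR K * costR n x 0 + 2 * INR n.
Proof. intros H. pose proof KposR. rewrite <- (Rabs_right (INR K)) by lra.
 rewrite <- costR_scale. rewrite Rmult_0_r.
 rewrite (costR_ext n aR (fun m => INR K * x m + (- (INR K * x m - aR m)))) by (intros; ring).
 replace 0 with (0 + 0) at 1 by ring. eapply Rle_trans. apply costR_sub.
 assert (forall m, (m < n)%nat -> Rabs (- (INR K * x m - aR m)) <= 1).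
 { intros. rewrite Rabs_Ropp. apply cube_dist; auto. }
 pose proof (costR_sum_bound _ H1). lra. Qed.

Lemma cost_pt : INR K * costR n (fun m => IZR (a m) / INR K) 0 = costR n aR 0.
Proof. pose proof KposR. rewrite <- (Rabs_right (INR K)) by lra. rewrite <- costR_scale. rewrite Rmult_0_r.
 apply costR_ext. intros. unfold aR. rewrite Rabs_right by lra. field. lra. Qed.

Lemma inner_lb : (costZ n a 0 <= 2 * Z.of_nat K - 2 * Z.of_nat n)%Z -> forall x, in_cube n K a x -> in_CA n x.
Proof. intros H x Hx. apply conv_inCA; auto. pose proof (cube_cost1 x Hx). pose proof KposR.
 apply IZR_le in H. rewrite costR_Z in H. rewrite minus_IZR, !mult_IZR, <- !INR_IZR_INZ in H.
 fold aR in H. assert (INR K * costR n x 0 <= INR K * 2) by lra.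
 apply Rmult_le_reg_l in H2; auto. Qed.

Lemma inner_ub : (forall x, in_cube n K a x -> in_CA n x) -> (costZ n a 0 <= 2 * Z.of_nat K)%Z.
Proof. intros H. pose proof (inCA_cost n _ (H _ cube_pt)). pose proof cost_pt. pose proof KposR.
 apply le_IZR. rewrite costR_Z, mult_IZR, <- INR_IZR_INZ. fold aR. rewrite <- H1.
 apply Rmult_le_compat_l with (r := INR K) in H0; lra. Qed.

Lemma outer_lb : (costZ n a 0 <= 2 * Z.of_nat K)%Z -> exists x, in_cube n K a x /\ in_CA n x.
Proof. intros H. exists (fun m => IZR (a m) / INR K). split. apply cube_pt. apply conv_inCA; auto.
 pose proof cost_pt. pose proof KposR. apply IZR_le in H. rewrite costR_Z, mult_IZR, <- INR_IZR_INZ in H.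
 fold aR in H. rewrite <- H0 in H. assert (INR K * costR n (fun m => IZR (a m) / INR K) 0 <= INR K * 2) by lra.
 apply Rmult_le_reg_l in H2; auto. Qed.

Lemma outer_ub : (exists x, in_cube n K a x /\ in_CA n x) -> (costZ n a 0 <= 2 * Z.of_nat K + 2 * Z.of_nat n)%Z.
Proof. intros (x & Hx & Hc). pose proof (inCA_cost n x Hc). pose proof (cube_cost2 x Hx). pose proof KposR.
 apply le_IZR. rewrite costR_Z, plus_IZR, !mult_IZR, <- !INR_IZR_INZ. fold aR.
 apply Rmult_le_compat_l with (r := INR K) in H; lra. Qed.

End Cube.


Lemma Un_cv_ev u v l N : (forall k, (N <= k)%nat -> u k = v k) -> Un_cv v l -> Un_cv u l.
Proof. intros H Hv e He. destruct (Hv e He) as [M HM]. exists (max N M). intros k Hk.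
 rewrite H by lia. apply HM. lia. Qed.

Lemma squeeze lo u hi l N : (forall k, (N <= k)%nat -> lo k <= u k <= hi k) ->
  Un_cv lo l -> Un_cv hi l -> Un_cv u l.
Proof. intros H Hl Hh e He. destruct (Hl e He) as [M1 H1]. destruct (Hh e He) as [M2 H2].
 exists (max N (max M1 M2)). intros k Hk. specialize (H k ltac:(lia)). specialize (H1 k ltac:(lia)).
 specialize (H2 k ltac:(lia)). unfold R_dist in *. apply Rabs_def2 in H1. apply Rabs_def2 in H2.
 apply Rabs_def1; lra. Qed.

Lemma cv_const c : Un_cv (fun _ => c) c.
Proof. intros e He. exists O. intros. unfold R_dist. rewrite Rminus_diag, Rabs_R0. auto. Qed.

Lemma cv_inv : Un_cv (fun k => / INR (S k)) 0.
Proof. intros e He. destruct (archimed (/ e)) as [H1 _].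
 exists (Z.to_nat (up (/ e))). intros k Hk. unfold R_dist. rewrite Rminus_0_r.
 assert (0 < INR (S k)) by (apply lt_0_INR; lia).
 rewrite Rabs_right by (left; apply Rinv_0_lt_compat; auto).
 assert (IZR (up (/ e)) <= INR k).
 { destruct (Z_le_gt_dec 0 (up (/e))). rewrite INR_IZR_INZ. apply IZR_le. lia.
   apply Rle_trans with 0. apply IZR_le; lia. apply pos_INR. }
 rewrite S_INR in *. apply (Rmult_lt_reg_l (INR k + 1)); auto. rewrite Rinv_r by lra.
 assert (/ e < INR k + 1) by lra. apply (Rmult_lt_compat_r e) in H2; auto. rewrite Rinv_l in H2; lra. Qed.

Lemma cv_pow u l p : Un_cv u l -> Un_cv (fun k => u k ^ p) (l ^ p).
Proof. intros H. induction p. simpl. apply cv_const. simpl. apply CV_mult; auto. Qed.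

Lemma cv_fsum (f : nat -> nat -> R) l N : (forall j, (j < N)%nat -> Un_cv (fun k => f k j) (l j)) ->
  Un_cv (fun k => fsum N (f k)) (fsum N l).
Proof. induction N; intros H; simpl. apply cv_const. apply CV_plus. apply IHN. intros; apply H; lia. apply H; lia. Qed.

Fixpoint rprod (k : nat) (f : nat -> R) : R := match k with O => 1 | S k' => rprod k' f * f k' end.

Lemma rprod_scal k f c : rprod k (fun i => f i * c) = rprod k f * c ^ k.
Proof. induction k; simpl. ring. rewrite IHk. ring. Qed.

Lemma bin_ff m j : INR (bin m j) * INR (fact j) = rprod j (fun i => INR m - INR i).
Proof. induction j. simpl. rewrite bin_0. simpl. ring.
 simpl rprod. rewrite <- IHj. rewrite fact_simpl, mult_INR.
 pose proof (bin_abs2 m j). apply (f_equal INR) in H. rewrite !mult_INR in H.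
 destruct (Nat.le_gt_cases j m).
 - rewrite minus_INR in H by auto. rewrite plus_INR in H. simpl in H. rewrite S_INR.
   replace (INR (bin m (S j)) * ((INR j + 1) * INR (fact j))) with ((INR j + 1) * INR (bin m (S j)) * INR (fact j)) by ring.
   rewrite H. ring.
 - rewrite !bin_gt by lia. simpl. ring.
Qed.

Lemma cv_ratio c j : Un_cv (fun k => (INR (S k) + c - INR j) / INR (S k)) 1.
Proof. apply (Un_cv_ev _ (fun k => 1 + (c - INR j) * / INR (S k)) _ O).
 intros k _. field. apply not_0_INR. lia.
 assert (H: Un_cv (fun k => 1 + (c - INR j) * / INR (S k)) (1 + (c - INR j) * 0)).
 { apply CV_plus. apply cv_const. apply CV_mult. apply cv_const. apply cv_inv. }
 rewrite Rmult_0_r, Rplus_0_r in H. exact H. Qed.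

Lemma cv_rprod c j : Un_cv (fun k => rprod j (fun i => (INR (S k) + c - INR i) / INR (S k))) 1.
Proof. induction j. exact (cv_const 1).
 assert (H: Un_cv (fun k => rprod j (fun i => (INR (S k) + c - INR i) / INR (S k)) * ((INR (S k) + c - INR j) / INR (S k))) (1 * 1)).
 { apply CV_mult; auto. apply cv_ratio. }
 rewrite Rmult_1_r in H. exact H. Qed.

Lemma cv_bin (m : nat -> nat) c j N : (forall k, (N <= k)%nat -> INR (m k) = INR (S k) + c) ->
  Un_cv (fun k => INR (bin (m k) j) * (/ INR (S k)) ^ j) (/ INR (fact j)).
Proof. intros H. apply (Un_cv_ev _ (fun k => rprod j (fun i => (INR (S k) + c - INR i) / INR (S k)) * / INR (fact j)) _ N).
 - intros k Hk. assert (INR (fact j) <> 0) by (apply INR_fact_neq_0).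
   apply (Rmult_eq_reg_r (INR (fact j))); auto.
   replace (INR (bin (m k) j) * (/ INR (S k)) ^ j * INR (fact j)) with (INR (bin (m k) j) * INR (fact j) * (/ INR (S k)) ^ j) by ring.
   rewrite bin_ff. unfold Rdiv. rewrite rprod_scal. rewrite H by auto. field. auto.
 - assert (H1 : Un_cv (fun k => rprod j (fun i => (INR (S k) + c - INR i) / INR (S k)) * / INR (fact j)) (1 * / INR (fact j))).
   { apply CV_mult. apply cv_rprod. apply cv_const. }
   rewrite Rmult_1_l in H1. exact H1.
Qed.

Lemma Bz_nat m j : Bz m (Z.of_nat j) = INR (bin m j).
Proof. unfold Bz. destruct (Z.ltb_spec (Z.of_nat j) 0). lia. rewrite Nat2Z.id. auto. Qed.

Lemma cv_Phi n (m : nat -> nat) c N : (forall k, (N <= k)%nat -> INR (m k) = INR (S k) + c) ->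
  Un_cv (fun k => (/ INR (S k)) ^ n * Phi n 0 (m k)) (INR (bin (2 * n) n) / INR (fact n)).
Proof. intros H. unfold Phi.
 set (A := fun j => Bz (n + j) (Z.of_nat j) * Bz (0 + n) (Z.of_nat n - Z.of_nat j)).
 apply (Un_cv_ev _ (fun k => fsum (S n) (fun j => A j * (INR (bin (m k) j) * (/ INR (S k)) ^ j) * (/ INR (S k)) ^ (n - j))) _ O).
 - intros k _. rewrite <- fsum_scal. apply fsum_ext. intros j Hj. unfold T, A. rewrite !Bz_nat.
   replace n with (j + (n - j))%nat at 1 by lia. rewrite pow_add. ring.
 - replace (INR (bin (2 * n) n) / INR (fact n)) with (fsum (S n) (fun j => A j * / INR (fact j) * 0 ^ (n - j))).
   + apply cv_fsum. intros j Hj. apply CV_mult. apply CV_mult. apply cv_const. apply (cv_bin m c j N H).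
     apply cv_pow. apply cv_inv.
   + rewrite fsum_S, fsum_zero. rewrite Nat.sub_diag. unfold A. simpl pow. rewrite Nat.add_0_l, Z.sub_diag, Bz_n0.
     rewrite Bz_nat. replace (n + n)%nat with (2 * n)%nat by lia. unfold Rdiv. ring.
     intros j Hj. replace (n - j)%nat with (S (n - j - 1)) by lia. simpl. ring.
Qed.


Lemma bin_fact n k : (k <= n)%nat -> (bin n k * fact k * fact (n - k) = fact n)%nat.
Proof. revert k; induction n; intros k Hk.
 - assert (k = 0%nat) by lia. subst. simpl. auto.
 - destruct k. rewrite bin_0. simpl (fact 0). rewrite Nat.sub_0_r. lia.
   change (bin (S n) (S k)) with (bin n k + bin n (S k))%nat.
   destruct (Nat.eq_dec k n).
   + subst. rewrite bin_nn, (bin_gt n (S n)) by lia. rewrite Nat.sub_diag. simpl. lia.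
   + pose proof (IHn k ltac:(lia)) as H1. pose proof (IHn (S k) ltac:(lia)) as H2.
     replace (S n - S k)%nat with (S (n - S k)) by lia.
     replace (n - k)%nat with (S (n - S k)) in H1 by lia.
     rewrite (fact_simpl n), (fact_simpl k), (fact_simpl (n - S k)).
     rewrite (fact_simpl (n - S k)) in H1. rewrite (fact_simpl k) in H2.
     set (A := bin n k) in *. set (B := bin n (S k)) in *. set (f := fact k) in *. set (g := fact (n - S k)) in *.
     set (F := fact n) in *. set (p := (n - S k)%nat) in *.
     assert (E: n = (k + S p)%nat) by (unfold p; lia). clearbody p. subst n. nia.
Qed.

Lemma C_bin a b : (b <= a)%nat -> Binomial.C a b = INR (bin a b).
Proof. intros H. unfold Binomial.C. pose proof (bin_fact a b H). apply (f_equal INR) in H0.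
 rewrite !mult_INR in H0. rewrite <- H0. field. split; apply INR_fact_neq_0. Qed.

Lemma sum_f_fsum f N : sum_f_R0 f N = fsum (S N) f.
Proof. induction N. simpl. rewrite Rplus_0_l. auto. rewrite fsum_S, <- IHN. simpl. auto. Qed.

Lemma vdm a b m : fsum (S m) (fun i => INR (bin a i) * INR (bin b (m - i))) = INR (bin (a + b) m).
Proof. revert m; induction a; intros m.
 - rewrite fsum_shift, fsum_zero. simpl. rewrite Nat.sub_0_r. ring.
   intros i Hi. simpl. ring.
 - destruct m.
   + simpl. rewrite bin_0. simpl. ring.
   + rewrite fsum_shift. rewrite bin_0. rewrite Nat.sub_0_r.
     rewrite (fsum_ext _ _ (fun j => INR (bin a j) * INR (bin b (m - j)) + INR (bin a (S j)) * INR (bin b (m - j)))).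
     2:{ intros j Hj. simpl bin. rewrite plus_INR. replace (S m - S j)%nat with (m - j)%nat by lia. ring. }
     rewrite fsum_plus, IHa.
     pose proof (IHa (S m)). rewrite fsum_shift, bin_0, Nat.sub_0_r in H.
     rewrite (fsum_ext _ (fun i => INR (bin a (S i)) * INR (bin b (S m - S i))) (fun j => INR (bin a (S j)) * INR (bin b (m - j)))) in H by auto.
     replace (S a + b)%nat with (S (a + b)) by lia. simpl (bin (S (a + b)) (S m)). rewrite plus_INR. lra.
Qed.

Lemma binom_sum n : (1 <= n)%nat ->
  sum_f_R0 (fun i => Binomial.C (n - 1) i * Binomial.C (n + 1) (i + 1)) (n - 1) = INR (bin (2 * n) n).
Proof. intros Hn. rewrite sum_f_fsum. replace (S (n - 1)) with n by lia.
 rewrite (fsum_ext _ _ (fun i => INR (bin (n - 1) i) * INR (bin (n + 1) (n - i)))).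
 2:{ intros i Hi. rewrite !C_bin by lia. f_equal. f_equal.
     replace (n + 1)%nat with ((i + 1) + (n - i))%nat by lia. rewrite bin_sym. auto. }
 rewrite <- (fsum_trunc (S n) n). rewrite vdm. f_equal. f_equal. lia. lia.
 intros i Hi. assert (i = n) by lia. subst. rewrite bin_gt by lia. simpl. ring.
Qed.


Lemma Hf_even n m : Hf n 0 (2 * Z.of_nat m) = Phi n 0 m.
Proof. rewrite (Hf_val n 0 _ m) by (simpl; lia). reflexivity. Qed.

Lemma cnt_Phi n L m : (2 * Z.of_nat m < Z.of_nat L)%Z ->
  gsum n L (fun a => Defs.ind (costZ n a 0 <= 2 * Z.of_nat m)%Z) = Phi n 0 m.
Proof. intros H. rewrite <- Hf_even. apply (cnt_eq n L 0). rewrite Z.abs_0. lia. Qed.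

Lemma inv_pow_nonneg K n : 0 <= (/ INR (S K)) ^ n.
Proof. apply pow_le. left. apply Rinv_0_lt_compat, lt_0_INR. lia. Qed.

Theorem lemma4p2 (n : nat) (Hn : (1 <= n)%nat) :
  exists c : R,
    jordan_content n (in_CA n) c /\
    INR (fact n) * c
      = sum_f_R0 (fun i => Binomial.C (n - 1) i * Binomial.C (n + 1) (i + 1)) (n - 1) /\
    sum_f_R0 (fun i => Binomial.C (n - 1) i * Binomial.C (n + 1) (i + 1)) (n - 1)
      = Binomial.C (2 * n) n.
Proof.
 exists (INR (bin (2 * n) n) / INR (fact n)). split; [|split].
 - exists 3%nat. split; [|split].
   + intros x Hx m Hm. pose proof (cost_coord n x m Hm (inCA_cost n x Hx)).
     simpl INR. revert H. unfold Rabs. destruct (Rcase_abs (x m)); intros; lra.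
   + apply (squeeze (fun k => (/ INR (S k)) ^ n * Phi n 0 (S k - n)) _ (fun k => (/ INR (S k)) ^ n * Phi n 0 (S k)) _ (2 * n + 1)).
     * intros k Hk. unfold inner_approx. pose proof (inv_pow_nonneg k n). split; apply Rmult_le_compat_l; auto.
       -- rewrite <- (cnt_Phi n (3 * S k) (S k - n)) by lia. apply gsum_le. intros a. apply ind_le.
          intros H1. apply (inner_lb n (S k) ltac:(lia) Hn a). lia.
       -- rewrite <- (cnt_Phi n (3 * S k) (S k)) by lia. apply gsum_le. intros a. apply ind_le.
          intros H1. apply (inner_ub n (S k) ltac:(lia) a). auto.
     * apply (cv_Phi n (fun k => (S k - n)%nat) (- INR n) n). intros k Hk. rewrite minus_INR by lia. ring.
     * apply (cv_Phi n (fun k => S k) 0 O). intros. ring.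
   + apply (squeeze (fun k => (/ INR (S k)) ^ n * Phi n 0 (S k)) _ (fun k => (/ INR (S k)) ^ n * Phi n 0 (S k + n)) _ (2 * n + 1)).
     * intros k Hk. unfold outer_approx. pose proof (inv_pow_nonneg k n). split; apply Rmult_le_compat_l; auto.
       -- rewrite <- (cnt_Phi n (3 * S k) (S k)) by lia. apply gsum_le. intros a. apply ind_le.
          intros H1. apply (outer_lb n (S k) ltac:(lia) Hn a). auto.
       -- rewrite <- (cnt_Phi n (3 * S k) (S k + n)) by lia. apply gsum_le. intros a. apply ind_le.
          intros H1. pose proof (outer_ub n (S k) ltac:(lia) a H1). lia.
     * apply (cv_Phi n (fun k => S k) 0 O). intros. ring.
     * apply (cv_Phi n (fun k => (S k + n)%nat) (INR n) O). intros. rewrite plus_INR. ring.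
 - rewrite binom_sum by auto. field. apply INR_fact_neq_0.
 - rewrite binom_sum by auto. rewrite C_bin by lia. auto.
Qed.
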